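(* Suppose $0<1/n\ll \nu\ll \tau,\varepsilon<1$ and let $G$ be a digraph on $n$ vertices with $\delta^0(G)\geq n/2$. Then $G$ is $\varepsilon$-extremal or $G$ is a robust $(\nu,\tau)$-outexpander.
   Context: Digraphs have no loops and at most one edge in each direction between two vertices; $\delta^0(G)$ is the minimum over vertices of the minimum of in- and outdegree. For $X,Y\subseteq V(G)$, $E(X,Y)$ is the set of edges $xy$ with $x\in X$, $y\in Y$ and $e(X,Y)=|E(X,Y)|$. For $0<\nu\leq\tau<1$ and $S\subseteq V(G)$, the $\nu$-robust outneighbourhood $RN^+_{\nu,G}(S)$ is the set of vertices of $G$ having at least $\nu n$ inneighbours in $S$; $G$ is a robust $(\nu,\tau)$-outexpander if $|RN^+_{\nu,G}(S)|\geq |S|+\nu n$ for all $S\subseteq V(G)$ with $\tau n<|S|<(1-\tau)n$. $G$ is $\varepsilon$-extremal if there is a partition $A,B,S,T$ of $V(G)$ with sizes $a,b,s,t$ such that $|a-b|,|s-t|\leq 1$ and $e(A\cup S,A\cup T)<\varepsilon n^2$. The hierarchy notation $\alpha\ll\beta$ means the statement holds whenever $\alpha$ is sufficiently small as a function of $\beta$ (constants chosen from right to left); here $1/n\ll\nu\ll \tau,\varepsilon$ means $\nu$ is sufficiently small relative to $\tau$ and $\varepsilon$, and $n$ sufficiently large relative to $\nu$. *)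

(* Defs.v *)
From HB Require Import structures.
From mathcomp Require Import all_boot all_order all_algebra.
Set Implicit Arguments. Unset Strict Implicit. Unset Printing Implicit Defensive.
Import Order.TTheory GRing.Theory Num.Theory.
Local Open Scope ring_scope.

(* A digraph on the finite vertex type V is an irreflexive relation E : rel V
   (E x y means the edge xy is present); a relation has at most one edge in
   each direction automatically.  n = #|V|. *)
Definition loopless (V : finType) (E : rel V) : Prop := irreflexive E.

Definition outdeg (V : finType) (E : rel V) (v : V) : nat := #|[set u | E v u]|.
Definition indeg (V : finType) (E : rel V) (v : V) : nat := #|[set u | E u v]|.

Definition min_semideg_ge_half (R : realFieldType) (V : finType) (E : rel V) : Prop :=
  forall v : V,
    (#|V|%:R / 2%:R <= (outdeg E v)%:R :> R) /\ (#|V|%:R / 2%:R <= (indeg E v)%:R :> R).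

Definition eXY (V : finType) (E : rel V) (X Y : {set V}) : nat :=
  #|[set p : V * V | (p.1 \in X) && (p.2 \in Y) && E p.1 p.2]|.

Definition RNout (R : realFieldType) (V : finType) (E : rel V) (nu : R) (S : {set V})
  : {set V} :=
  [set v | nu * #|V|%:R <= #|[set u in S | E u v]|%:R].

Definition robust_outexpander (R : realFieldType) (V : finType) (E : rel V) (nu tau : R)
  : Prop :=
  forall S : {set V},
    tau * #|V|%:R < #|S|%:R -> #|S|%:R < (1 - tau) * #|V|%:R ->
    #|S|%:R + nu * #|V|%:R <= (#|RNout E nu S|)%:R.

Definition partition4 (V : finType) (A B S T : {set V}) : Prop :=
  [&& [disjoint A & B], [disjoint A & S], [disjoint A & T],
      [disjoint B & S], [disjoint B & T] & [disjoint S & T]]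
  /\ A :|: B :|: S :|: T = [set: V].

Definition extremal (R : realFieldType) (V : finType) (E : rel V) (eps : R) : Prop :=
  exists A B S T : {set V},
    [/\ partition4 A B S T,
        ((#|A| <= #|B| + 1)%N /\ (#|B| <= #|A| + 1)%N),
        ((#|S| <= #|T| + 1)%N /\ (#|T| <= #|S| + 1)%N)
      & (eXY E (A :|: S) (A :|: T))%:R < eps * (#|V|%:R ^+ 2)].

(* Main.v *)
Require Import Defs.
From HB Require Import structures.
From mathcomp Require Import all_boot all_order all_algebra.
From mathcomp Require Import zify ring lra.
Import Order.TTheory GRing.Theory Num.Theory.
Local Open Scope ring_scope.

Lemma eXY_sum2 (V : finType) (E : rel V) X Y :
  eXY E X Y = (\sum_(x : V) \sum_(y : V) (if (x \in X) && (y \in Y) && E x y then 1 else 0))%N.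
Proof.
rewrite /eXY -sum1_card big_mkcond /=.
rewrite (pair_big predT predT (fun x y => if (x \in X) && (y \in Y) && E x y then 1%N else 0%N)) /=.
by apply: eq_bigr => -[x y] _; rewrite inE.
Qed.

Lemma eXY_sumL (V : finType) (E : rel V) X Y :
  eXY E X Y = (\sum_(x in X) #|[set y in Y | E x y]|)%N.
Proof.
rewrite eXY_sum2 [RHS]big_mkcond /=; apply: eq_bigr => x _.
case: (boolP (x \in X)) => hx; rewrite ?hx ?(negbTE hx) /=.
  rewrite -sum1_card [RHS]big_mkcond /=.
  by apply: eq_bigr => y _; rewrite !inE.
by rewrite big1 // => y _.
Qed.

Lemma eXY_sumR (V : finType) (E : rel V) X Y :
  eXY E X Y = (\sum_(y in Y) #|[set x in X | E x y]|)%N.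
Proof.
rewrite eXY_sum2 exchange_big [RHS]big_mkcond /=; apply: eq_bigr => y _.
case: (boolP (y \in Y)) => hy; rewrite ?hy ?(negbTE hy) /=.
  rewrite -sum1_card [RHS]big_mkcond /=.
  by apply: eq_bigr => x _; rewrite !inE andbT.
by rewrite big1 // => x _; rewrite andbF.
Qed.

Lemma exists_subset_card (T : finType) (A : {set T}) m :
  (m <= #|A|)%N -> exists2 Z : {set T}, Z \subset A & #|Z| = m.
Proof.
elim: m => [|m IH] hm; first by exists set0; rewrite ?sub0set ?cards0.
have [Z ZA cZ] := IH (ltnW hm).
have : (0 < #|A :\: Z|)%N by rewrite cardsD (setIidPr ZA) cZ subn_gt0.
case/card_gt0P => x; rewrite inE => /andP [xZ xA].
exists (x |: Z); first by rewrite subUset sub1set xA ZA.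
by rewrite cardsU1 xZ cZ.
Qed.

Lemma resize (T : finType) (X : {set T}) m : (m <= #|T|)%N ->
  exists X' : {set T}, [/\ #|X'| = m, #|X' :\: X| = (m - #|X|)%N & #|X :\: X'| = (#|X| - m)%N].
Proof.
move=> hm; case: (leqP #|X| m) => hX.
  have hc : (m - #|X| <= #|~: X|)%N by move: (cardsC X); lia.
  have [Z ZC cZ] := exists_subset_card _ _ _ hc.
  have dZ : X :&: Z = set0.
    by apply/setP=> x; rewrite !inE; apply/negbTE/negP=> /andP[h1 h2]; move/subsetP: ZC => /(_ x h2); rewrite inE h1.
  exists (X :|: Z); split.
  - by rewrite cardsU dZ cards0 cZ; lia.
  - rewrite setDUl setDv set0U cardsD setIC dZ cards0 subn0 cZ //.
  - rewrite setDUr setDv set0I cards0; lia.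
have [Z ZX cZ] := exists_subset_card _ _ _ (ltnW hX).
exists Z; split => //.
- have -> : Z :\: X = set0 by apply/setP=> x; rewrite !inE; case: (boolP (x \in Z)) => h; rewrite ?andbT ?andbF /= ?(subsetP ZX x h).
  by rewrite cards0; lia.
- by rewrite cardsD (setIidPr ZX) cZ.
Qed.

Lemma edge_bound (V : finType) (E : rel V) (X Y X' Y' : {set V}) :
  (eXY E X' (~: Y') <= eXY E X (~: Y) + #|X' :\: X| * #|V| + #|Y :\: Y'| * #|V|)%N.
Proof.
rewrite /eXY.
set P := [set p : V * V | _].
set Q := [set p : V * V | _].
have sub : P \subset (Q :|: setX (X' :\: X) [set: V]) :|: setX [set: V] (Y :\: Y').
  apply/subsetP => -[x y]; rewrite !inE /=; case: (x \in X'); case: (y \in Y'); case: (x \in X); case: (y \in Y); case: (E x y) => //.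
have h1 := cardsUI (Q :|: setX (X' :\: X) [set: V]) (setX [set: V] (Y :\: Y')).
have h2 := cardsUI Q (setX (X' :\: X) [set: V]).
have h3 := subset_leq_card sub.
move: h1 h2 h3; rewrite !cardsX cardsT; lia.
Qed.

Lemma split_in (V : finType) (P : pred V) (S : {set V}) :
  #|[set u | P u]| = (#|[set u in S | P u]| + #|[set u in ~: S | P u]|)%N.
Proof.
by rewrite -(cardsID S [set u | P u]); congr (_ + _)%N; apply: eq_card => u; rewrite !inE // andbC.
Qed.

Lemma outdeg_row (V : finType) (E : rel V) u :
  outdeg E u = #|[set y in [set: V] | E u y]|.
Proof. by apply: eq_card => y; rewrite !inE. Qed.

Lemma indeg_col (V : finType) (E : rel V) v :
  indeg E v = #|[set x in [set: V] | E x v]|.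
Proof. by apply: eq_card => y; rewrite !inE. Qed.

Lemma build_partition (V : finType) (E : rel V) (X' Y' : {set V}) :
  (#|X'| + #|Y'| = #|V|)%N -> (#|X'| <= #|Y'| <= #|X'| + 1)%N ->
  exists A B S T : {set V},
    [/\ partition4 A B S T,
        ((#|A| <= #|B| + 1)%N /\ (#|B| <= #|A| + 1)%N),
        ((#|S| <= #|T| + 1)%N /\ (#|T| <= #|S| + 1)%N)
      & eXY E (A :|: S) (A :|: T) = eXY E X' (~: Y')].
Proof.
move=> hs /andP [hk1 hk2].
exists (X' :\: Y'), (Y' :\: X'), (X' :&: Y'), (~: (X' :|: Y')).
have eA := cardsID Y' X'.
have eB := cardsID X' Y'.
have eU := cardsUI X' Y'.
have eC := cardsC (X' :|: Y').
try rewrite cardsT in eC.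
rewrite setIC in eB.
split.
- split.
    by rewrite /= -!setI_eq0; repeat (apply/andP; split); apply/eqP/setP => x; rewrite !inE;
      case: (x \in X'); case: (x \in Y').
  by apply/setP => x; rewrite !inE; case: (x \in X'); case: (x \in Y').
- lia.
- lia.
- congr eXY; apply/setP => x; rewrite !inE; case: (x \in X'); case: (x \in Y') => //.
Qed.

Lemma arith (R : realFieldType) (n s r m eSR eSN eNN d1 d2 e tau eps nu : R) :
 0 < tau -> tau < 1 -> 0 < eps -> eps < 1 -> 0 < nu -> nu <= eps * tau / 10 ->
 tau * n < s -> s < (1 - tau) * n -> r < s + nu * n -> s <= n -> r + m = n ->
 0 <= r -> 0 <= m ->
 s * n / 2 <= eSR + eSN -> eSR <= s * r -> eSN <= m * (nu * n) ->
 m * n / 2 <= eSN + eNN -> eNN <= (n - s) * m ->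
 0 <= d1 -> (d1 = 0 \/ d1 <= n / 2 - s) -> 0 <= d2 -> (d2 = 0 \/ d2 <= r - n / 2) ->
 e <= eSN + d1 * n + d2 * n -> e < eps * n ^+ 2.
Proof.
move=> t0 t1 e0 e1 nu0 nut ts st rs sn rm r0 m0 A1 A2 A3 A4 A5 d10 d1b d20 d2b he.
have n0 : 0 < n by nra.
have nutau : nu <= tau by nra.
have nun : 0 <= nu * n by apply: mulr_ge0; lra.
have mpos : 0 < m by nra.
have mn : m <= n by lra.
have B1 : s <= n / 2 + nu * n.
  have : m * (n / 2 - nu * n - n + s) <= 0 by nra.
  nra.
have B2 : tau * (n / 2 - r) <= nu * n.
  have E1 : m * (nu * n) <= n * (nu * n).
    apply: ler_wpM2r; [by apply: mulr_ge0; lra | lra].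
  have C : s * (n / 2 - r) <= n * (nu * n) by lra.
  case: (lerP (n / 2 - r) 0) => h; first by nra.
  have : tau * n * (n / 2 - r) <= n * (nu * n) by nra.
  nra.
have D1 : tau * d1 <= nu * n + tau * (nu * n).
  case: d1b => [->|h]; first by nra.
  nra.
have D2 : d2 <= 2 * (nu * n).
  case: d2b => [->|h]; lra.
have F : tau * e <= 5 * (nu * n) * n.
  have E1 : m * (nu * n) <= n * (nu * n).
    apply: ler_wpM2r; [by apply: mulr_ge0; lra | lra].
  have E2 : tau * (d2 * n) <= 2 * (nu * n) * n.
    have : d2 * n <= 2 * (nu * n) * n by apply: ler_wpM2r; lra.
    nra.
  have E3 : tau * (d1 * n) <= (nu * n + tau * (nu * n)) * n.
    rewrite mulrA; apply: ler_wpM2r; lra.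
  have E4 : tau * e <= tau * (eSN + d1 * n + d2 * n) by apply: ler_wpM2l; lra.
  have E5 : tau * (nu * n * n) <= nu * n * n by nra.
  nra.
have G : 5 * (nu * n) * n <= tau * (eps * n ^+ 2) / 2.
  rewrite expr2; nra.
nra.
Qed.

Lemma natB_bound (R : realFieldType) (a b : nat) (c : R) :
  a%:R - b%:R <= c -> ((a - b)%N%:R = 0 :> R \/ (a - b)%N%:R <= c).
Proof.
case: (leqP a b) => h.
  by left; have -> : (a - b)%N = 0%N by apply/eqP; rewrite subn_eq0.
by right; rewrite natrB // ltnW.
Qed.

Lemma half_facts n : [/\ (2 * (n %/ 2) <= n)%N, (n <= 2 * (n - n %/ 2))%N,
  (n %/ 2 + (n - n %/ 2) = n)%N & (n %/ 2 <= n - n %/ 2 <= n %/ 2 + 1)%N].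
Proof. split; try apply/andP; try split; lia. Qed.

Lemma half_le1 (R : realFieldType) (a n c : R) : 2 * a <= n -> a - c <= n / 2 - c.
Proof. lra. Qed.

Lemma half_le2 (R : realFieldType) (k n r : R) : n <= 2 * k -> r - k <= r - n / 2.
Proof. lra. Qed.

Theorem lemma4p4 (R : archiRealFieldType) :
  forall tau eps : R, 0 < tau < 1 -> 0 < eps < 1 ->
  exists nu0 : R, 0 < nu0 /\
  forall nu : R, 0 < nu <= nu0 ->
  exists N : nat, forall (V : finType) (E : rel V),
    loopless E -> (N <= #|V|)%N -> min_semideg_ge_half R E ->
    extremal E eps \/ robust_outexpander E nu tau.
Proof.
move=> tau eps /andP[t0 t1] /andP[e0 e1].
exists (eps * tau / 10); split; first by apply: divr_gt0; [apply: mulr_gt0|]; lra.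
move=> nu /andP[nu0 nut].
exists 0%N => V E _ _ hdeg.
case: (boolP [exists S : {set V}, [&& tau * #|V|%:R < #|S|%:R, #|S|%:R < (1 - tau) * #|V|%:R & ~~ (#|S|%:R + nu * #|V|%:R <= (#|RNout E nu S|)%:R)]]); last first.
  by move/existsPn => H; right => S h1 h2; move: (H S); rewrite h1 h2 /= negbK.
case/existsP => S /and3P [ts st]; rewrite -ltNge => rs.
left.
set RN := RNout E nu S in rs *.
set n := #|V| in ts st rs hdeg *.
have hn : (n %/ 2 <= n)%N by apply: leq_div.
have hn2 : (n - n %/ 2 <= n)%N by apply: leq_subr.
have [X' [cX' dX1 dX2]] := resize _ S (n %/ 2) hn.
have [Y' [cY' dY1 dY2]] := resize _ RN (n - n %/ 2) hn2.
have [A [B [S0 [T [hp hab hst he]]]]] := build_partition _ E X' Y'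
   ltac:(by rewrite cX' cY'; case: (half_facts n)) ltac:(by rewrite cX' cY'; case: (half_facts n)).
exists A, B, S0, T; split => //.
rewrite he.
have sn : #|S|%:R <= n%:R :> R by rewrite ler_nat max_card.
have rm : #|RN|%:R + #|~: RN|%:R = n%:R :> R by rewrite -natrD cardsC.
have A2 : (eXY E S RN)%:R <= #|S|%:R * #|RN|%:R :> R.
  rewrite -natrM ler_nat eXY_sumL -sum_nat_const; apply: leq_sum => x _.
  by apply: subset_leq_card; apply/subsetP => y; rewrite inE => /andP[].
have A1 : #|S|%:R * n%:R / 2 <= (eXY E S RN)%:R + (eXY E S (~: RN))%:R :> R.
  have hs : (eXY E S RN + eXY E S (~: RN) = \sum_(x in S) outdeg E x)%N.
    by rewrite !eXY_sumL -big_split; apply: eq_bigr => x _; rewrite /outdeg (split_in _ (E x) RN).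
  rewrite -natrD hs natr_sum.
  apply: le_trans (ler_sum _ (fun x _ => (hdeg x).1)).
  by rewrite sumr_const -mulrA mulr_natl.
have hlt : forall v, v \in ~: RN -> (#|[set u in S | E u v]|)%:R < nu * n%:R.
  by move=> v; rewrite inE /RN /RNout inE -ltNge.
have A3 : (eXY E S (~: RN))%:R <= #|~: RN|%:R * (nu * n%:R) :> R.
  rewrite eXY_sumR natr_sum.
  apply: le_trans (ler_sum _ (fun v hv => ltW (hlt v hv))) _.
  by rewrite sumr_const mulr_natl.
have A4 : #|~: RN|%:R * n%:R / 2 <= (eXY E S (~: RN))%:R + (eXY E (~: S) (~: RN))%:R :> R.
  have hs : (eXY E S (~: RN) + eXY E (~: S) (~: RN) = \sum_(v in ~: RN) indeg E v)%N.
    by rewrite !eXY_sumR -big_split; apply: eq_bigr => v _; rewrite /indeg (split_in _ (fun u => E u v) S).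
  rewrite -natrD hs natr_sum.
  apply: le_trans (ler_sum _ (fun x _ => (hdeg x).2)).
  by rewrite sumr_const -mulrA mulr_natl.
have A5 : (eXY E (~: S) (~: RN))%:R <= (n%:R - #|S|%:R) * #|~: RN|%:R :> R.
  have -> : n%:R - #|S|%:R = #|~: S|%:R :> R.
    by apply/eqP; rewrite subr_eq -natrD addnC cardsC.
  rewrite -natrM ler_nat eXY_sumR mulnC -sum_nat_const; apply: leq_sum => x _.
  by apply: subset_leq_card; apply/subsetP => y; rewrite inE => /andP[].
have d1b : #|X' :\: S|%:R = 0 :> R \/ #|X' :\: S|%:R <= n%:R / 2 - #|S|%:R :> R.
  rewrite dX1; apply: natB_bound.
  have [h _ _ _] := half_facts n.
  by apply: half_le1; rewrite -natrM ler_nat.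
have d2b : #|RN :\: Y'|%:R = 0 :> R \/ #|RN :\: Y'|%:R <= #|RN|%:R - n%:R / 2 :> R.
  rewrite dY2; apply: natB_bound.
  have [_ h _ _] := half_facts n.
  by apply: half_le2; rewrite -natrM ler_nat.
have hE : (eXY E X' (~: Y'))%:R <= (eXY E S (~: RN))%:R + #|X' :\: S|%:R * n%:R + #|RN :\: Y'|%:R * n%:R :> R.
  by rewrite -!natrM -!natrD ler_nat; apply: edge_bound.
exact: (arith _ _ _ _ _ _ _ _ _ _ _ _ _ _ t0 t1 e0 e1 nu0 nut ts st rs sn rm (ler0n _ _) (ler0n _ _) A1 A2 A3 A4 A5
   (ler0n _ _) d1b (ler0n _ _) d2b hE).
Qed.
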